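(* Let $n\ge 3$ and $a\in\mathbb{C}^\times$ with $a\neq\pm1$. Let $\{e_{\alpha_i},f_{\alpha_i}\mid 1\leq i\leq 2n-1\}$ be Chevalley generators of the simple Lie algebra $\mathfrak{g}$ of type $A_{2n-1}$, with simple roots $\alpha_1,\dots,\alpha_{2n-1}$ labeled along the Dynkin chain $1-2-\cdots-(2n-1)$. Put $$e_{\alpha_{2n}}=a[f_{\alpha_{2n-1}},[\cdots,[f_{\alpha_2},f_{\alpha_1}]\cdots]],\qquad f_{\alpha_{2n}}=a^{-1}[[\cdots[e_{\alpha_1},e_{\alpha_2}],\cdots],e_{\alpha_{2n-1}}].$$ Then there is a Lie algebra homomorphism $\mathrm{gim}(M_n)\to\mathfrak{g}$ with $e_i\mapsto e_{\alpha_i}-f_{\alpha_{n+i}}$ and $f_i\mapsto f_{\alpha_i}-e_{\alpha_{n+i}}$ for $1\le i\le n$.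
   Context: For $n\geq 3$, $M_n=(m_{i,j})$ is the $n\times n$ integer matrix with $m_{i,i}=2$, $m_{i,i+1}=m_{i+1,i}=-1$ ($1\le i\le n-1$), $m_{1,n}=m_{n,1}=1$, all other entries $0$. $\mathrm{gim}(M_n)$ is the complex Lie algebra generated by $e_i,f_i,h_i$ ($1\le i\le n$) with relations: (R1) $[h_i,e_j]=m_{i,j}e_j$, $[h_i,f_j]=-m_{i,j}f_j$, $[e_i,f_i]=h_i$ for all $i,j$; (R2) for $i\ne j$ with $m_{i,j}\le0$: $[e_i,f_j]=0=[f_i,e_j]$, $(\mathrm{ad}\,e_i)^{1-m_{i,j}}e_j=0=(\mathrm{ad}\,f_i)^{1-m_{i,j}}f_j$; (R3) for $i\ne j$ with $m_{i,j}>0$: $[e_i,e_j]=0=[f_i,f_j]$, $(\mathrm{ad}\,e_i)^{m_{i,j}+1}f_j=0=(\mathrm{ad}\,f_i)^{m_{i,j}+1}e_j$. Chevalley generators $e_{\alpha_i},f_{\alpha_i}$ satisfy the standard Serre presentation with $h_{\alpha_i}=[e_{\alpha_i},f_{\alpha_i}]$. *)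

(* Defs.v *)
From mathcomp Require Import all_boot all_algebra.
From mathcomp Require Export reals complex.
Set Implicit Arguments. Unset Strict Implicit. Unset Printing Implicit Defensive.
Import GRing.Theory Num.Theory.
Local Open Scope ring_scope.

Definition is_lie_bracket (K : fieldType) (L : lmodType K)
    (br : L -> L -> L) : Prop :=
  [/\ (forall (c : K) (x y z : L), br (c *: x + y) z = c *: br x z + br y z),
      (forall (c : K) (x y z : L), br z (c *: x + y) = c *: br z x + br z y),
      (forall x : L, br x x = 0) &
      (forall x y z : L, br x (br y z) + br y (br z x) + br z (br x y) = 0)].

Definition lie_subalgebra (K : fieldType) (L : lmodType K)
    (br : L -> L -> L) (S : L -> Prop) : Prop :=
  [/\ S 0,
      (forall x y, S x -> S y -> S (x + y)),
      (forall (c : K) x, S x -> S (c *: x)) &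
      (forall x y, S x -> S y -> S (br x y))].

Definition ad_pow (K : fieldType) (L : lmodType K) (br : L -> L -> L)
    (k : nat) (x y : L) : L := iter k (br x) y.

Definition cartanA (i j : nat) : int :=
  if i == j then (2 : int)
  else if (i == j.+1) || (j == i.+1) then (-1 : int) else (0 : int).

(* The elements e_{alpha_i}, f_{alpha_i} (1 <= i <= m) are Chevalley
   generators of the Lie algebra (L, br): they satisfy the Chevalley-Serre
   relations of type A_m (with h_i := [e_i, f_i]), generate L, and L <> 0.
   By Serre's theorem this says exactly that L is the simple Lie algebra of
   type A_m and (E, F) is a system of Chevalley generators of it. *)
Definition chevalley_generators_A (K : fieldType) (L : lmodType K)
    (br : L -> L -> L) (m : nat) (E F : nat -> L) : Prop :=
  let H i := br (E i) (F i) in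
  [/\ (forall i j, (1 <= i <= m)%N -> (1 <= j <= m)%N -> br (H i) (H j) = 0),
      (forall i j, (1 <= i <= m)%N -> (1 <= j <= m)%N ->
          br (H i) (E j) = (cartanA i j)%:~R *: E j /\
          br (H i) (F j) = - ((cartanA i j)%:~R *: F j)),
      (forall i j, (1 <= i <= m)%N -> (1 <= j <= m)%N -> i != j ->
          br (E i) (F j) = 0),
      (forall i j, (1 <= i <= m)%N -> (1 <= j <= m)%N -> i != j ->
          ad_pow br (absz (1 - cartanA i j)) (E i) (E j) = 0 /\
          ad_pow br (absz (1 - cartanA i j)) (F i) (F j) = 0) &
      (forall S : L -> Prop, lie_subalgebra br S ->
          (forall i, (1 <= i <= m)%N -> S (E i) /\ S (F i)) -> forall x, S x) /\
      (exists x : L, x != 0)].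

Fixpoint nested_left (K : fieldType) (L : lmodType K) (br : L -> L -> L)
    (F : nat -> L) (k : nat) : L :=
  match k with
  | 0 => 0
  | 1 => F 1%N
  | k'.+1 => br (F k) (nested_left br F k')
  end.

Fixpoint nested_right (K : fieldType) (L : lmodType K) (br : L -> L -> L)
    (E : nat -> L) (k : nat) : L :=
  match k with
  | 0 => 0
  | 1 => E 1%N
  | k'.+1 => br (nested_right br E k') (E k)
  end.

Definition gimM (n i j : nat) : int :=
  if i == j then (2 : int)
  else if (i == j.+1) || (j == i.+1) then (-1 : int)
  else if ((i == 1%N) && (j == n)) || ((i == n) && (j == 1%N)) then (1 : int)
  else (0 : int).

(* The Lie algebra gim(M_n) is presented by generators e_i, f_i, h_i
   (1 <= i <= n) and relations (R1)-(R3).  By the universal property of a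
   presented Lie algebra, a Lie algebra homomorphism gim(M_n) -> (L, br)
   with e_i |-> X i, f_i |-> Y i exists iff the relations (R1)-(R3) hold in L
   for X, Y and h_i |-> H i; since [e_i, f_i] = h_i is a relation, necessarily
   H i = [X i, Y i].  [gim_hom_exists] is this unfolded universal property. *)
Definition gim_relations (K : fieldType) (L : lmodType K) (br : L -> L -> L)
    (n : nat) (X Y H : nat -> L) : Prop :=
  [/\
      (forall i j, (1 <= i <= n)%N -> (1 <= j <= n)%N ->
         [/\ br (H i) (X j) = (gimM n i j)%:~R *: X j,
             br (H i) (Y j) = - ((gimM n i j)%:~R *: Y j) &
             br (X i) (Y i) = H i]),
      (forall i j, (1 <= i <= n)%N -> (1 <= j <= n)%N -> i != j ->
         (gimM n i j <= 0)%R ->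
         [/\ br (X i) (Y j) = 0, br (Y i) (X j) = 0,
             ad_pow br (absz (1 - gimM n i j)) (X i) (X j) = 0 &
             ad_pow br (absz (1 - gimM n i j)) (Y i) (Y j) = 0]) &
      (forall i j, (1 <= i <= n)%N -> (1 <= j <= n)%N -> i != j ->
         (0 < gimM n i j)%R ->
         [/\ br (X i) (X j) = 0, br (Y i) (Y j) = 0,
             ad_pow br (absz (gimM n i j + 1)) (X i) (Y j) = 0 &
             ad_pow br (absz (gimM n i j + 1)) (Y i) (X j) = 0])].

Definition gim_hom_exists (K : fieldType) (L : lmodType K) (br : L -> L -> L)
    (n : nat) (X Y : nat -> L) : Prop :=
  exists H : nat -> L, gim_relations br n X Y H.

(* Main.v *)
Require Import Defs.
From mathcomp Require Import all_boot all_algebra.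
From mathcomp Require Import reals complex.
From mathcomp Require Import zify.
Import GRing.Theory Num.Theory.
Local Open Scope ring_scope.
Set Implicit Arguments. Unset Strict Implicit.

Lemma lb_lin1 (K : fieldType) (L : lmodType K) (br : L -> L -> L) :
  is_lie_bracket br -> forall (c : K) (x y z : L), br (c *: x + y) z = c *: br x z + br y z.
Proof. by case. Qed.
Lemma lb_lin2 (K : fieldType) (L : lmodType K) (br : L -> L -> L) :
  is_lie_bracket br -> forall (c : K) (x y z : L), br z (c *: x + y) = c *: br z x + br z y.
Proof. by case. Qed.
Lemma lb_alt (K : fieldType) (L : lmodType K) (br : L -> L -> L) :
  is_lie_bracket br -> forall x : L, br x x = 0.
Proof. by case. Qed.
Lemma lb_jac (K : fieldType) (L : lmodType K) (br : L -> L -> L) :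
  is_lie_bracket br -> forall x y z : L, br x (br y z) + br y (br z x) + br z (br x y) = 0.
Proof. by case. Qed.

Lemma br0l (K : fieldType) (L : lmodType K) (br : L -> L -> L) :
  is_lie_bracket br -> forall z, br 0 z = 0.
Proof.
move=> Hb z; have := lb_lin1 Hb 1 0 0 z; rewrite !scale1r addr0 => e.
by move/(congr1 (fun v => v - br 0 z)): e; rewrite subrr addrK => <-.
Qed.
Lemma br0r (K : fieldType) (L : lmodType K) (br : L -> L -> L) :
  is_lie_bracket br -> forall z, br z 0 = 0.
Proof.
move=> Hb z; have := lb_lin2 Hb 1 0 0 z; rewrite !scale1r addr0 => e.
by move/(congr1 (fun v => v - br z 0)): e; rewrite subrr addrK => <-.
Qed.
Lemma brDl (K : fieldType) (L : lmodType K) (br : L -> L -> L) :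
  is_lie_bracket br -> forall x y z, br (x + y) z = br x z + br y z.
Proof. by move=> Hb x y z; rewrite -{1}(scale1r x) (lb_lin1 Hb) scale1r. Qed.
Lemma brDr (K : fieldType) (L : lmodType K) (br : L -> L -> L) :
  is_lie_bracket br -> forall x y z, br z (x + y) = br z x + br z y.
Proof. by move=> Hb x y z; rewrite -{1}(scale1r x) (lb_lin2 Hb) scale1r. Qed.
Lemma brZl (K : fieldType) (L : lmodType K) (br : L -> L -> L) :
  is_lie_bracket br -> forall c x z, br (c *: x) z = c *: br x z.
Proof. by move=> Hb c x z; rewrite -[c *: x]addr0 (lb_lin1 Hb) (br0l Hb) addr0. Qed.
Lemma brZr (K : fieldType) (L : lmodType K) (br : L -> L -> L) :
  is_lie_bracket br -> forall c x z, br z (c *: x) = c *: br z x.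
Proof. by move=> Hb c x z; rewrite -[c *: x]addr0 (lb_lin2 Hb) (br0r Hb) addr0. Qed.
Lemma brNl (K : fieldType) (L : lmodType K) (br : L -> L -> L) :
  is_lie_bracket br -> forall x z, br (- x) z = - br x z.
Proof. by move=> Hb x z; rewrite -scaleN1r (brZl Hb) scaleN1r. Qed.
Lemma brNr (K : fieldType) (L : lmodType K) (br : L -> L -> L) :
  is_lie_bracket br -> forall x z, br z (- x) = - br z x.
Proof. by move=> Hb x z; rewrite -scaleN1r (brZr Hb) scaleN1r. Qed.
Lemma brBl (K : fieldType) (L : lmodType K) (br : L -> L -> L) :
  is_lie_bracket br -> forall x y z, br (x - y) z = br x z - br y z.
Proof. by move=> Hb x y z; rewrite (brDl Hb) (brNl Hb). Qed.
Lemma brBr (K : fieldType) (L : lmodType K) (br : L -> L -> L) :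
  is_lie_bracket br -> forall x y z, br z (x - y) = br z x - br z y.
Proof. by move=> Hb x y z; rewrite (brDr Hb) (brNr Hb). Qed.
Lemma br_anti (K : fieldType) (L : lmodType K) (br : L -> L -> L) :
  is_lie_bracket br -> forall x y, br x y = - br y x.
Proof.
move=> Hb x y; have := lb_alt Hb (x + y).
rewrite (brDl Hb) (brDr Hb x y x) (brDr Hb x y y) (lb_alt Hb x) (lb_alt Hb y) add0r addr0 => /eqP.
by rewrite addr_eq0 => /eqP.
Qed.
Lemma jacL (K : fieldType) (L : lmodType K) (br : L -> L -> L) :
  is_lie_bracket br -> forall x y z, br x (br y z) = br (br x y) z + br y (br x z).
Proof.
move=> Hb x y z; have := lb_jac Hb x y z.
rewrite (br_anti Hb z x) (br_anti Hb z (br x y)) (brNr Hb) => /eqP.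
by rewrite -addrA -opprD subr_eq0 => /eqP ->; rewrite addrC.
Qed.
Lemma jacR (K : fieldType) (L : lmodType K) (br : L -> L -> L) :
  is_lie_bracket br -> forall x y z, br (br x y) z = br x (br y z) - br y (br x z).
Proof. by move=> Hb x y z; rewrite (jacL Hb) addrK. Qed.
Definition wt (p k : nat) : int := (((k == 1)%N : nat) + ((k == p)%N : nat))%:Z - ((k == p.+1)%N : nat)%:Z.
Lemma wt_step p k : (1 <= p)%N -> (1 <= k)%N -> wt p.+1 k = wt p k + cartanA k p.+1.
Proof. move=> p1 k1; rewrite /wt /cartanA; do ![case: eqP => ? /=]; lia. Qed.
Lemma wt1 k : (1 <= k)%N -> wt 1 k = cartanA k 1.
Proof. move=> k1; rewrite /wt /cartanA; do ![case: eqP => ? /=]; lia. Qed.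
Lemma cartanA_sym i j : cartanA i j = cartanA j i.
Proof. rewrite /cartanA; do ![case: eqP => ? /=]; lia. Qed.
Lemma sum_ind q c : (\sum_(1 <= i < q.+1) (((i == c)%N : nat)%:Z)) = ((1 <= c <= q)%N : nat)%:Z.
Proof.
elim: q => [|q IH]; first by rewrite big_geq //; case: c => [|[|c]].
rewrite big_nat_recr //= IH; do ![case: eqP => ? /=]; try lia.
all: case: (leqP 1 c) => ?; case: (leqP c q) => ?; case: (leqP c q.+1) => ? /=; lia.
Qed.
Lemma wt_sum q k : (1 <= q)%N -> (1 <= k)%N -> \sum_(1 <= j < q.+1) cartanA k j = wt q k.
Proof.
move=> + k1; elim: q => [//|q IH] _.
case: (posnP q) => [->|q0]; first by rewrite big_nat1 wt1.
by rewrite big_nat_recr //= IH // wt_step.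
Qed.
Lemma wt_tot m : (2 <= m)%N -> \sum_(1 <= i < m.+1) wt m i = 2.
Proof.
move=> m2; rewrite /wt.
under eq_bigr do rewrite PoszD.
rewrite sumrB big_split /= !sum_ind.
do ![case: leqP => ? /=]; lia.
Qed.

Definition adjA (i j : nat) := ((i == j.+1) || (j == i.+1))%N.
Definition inr (m i : nat) := (1 <= i <= m)%N.

Definition serreA (K : fieldType) (L : lmodType K) (br : L -> L -> L) (m : nat)
   (E F : nat -> L) : Prop :=
 [/\ (forall i j, inr m i -> inr m j ->
        br (br (E i) (F i)) (E j) = (cartanA i j)%:~R *: E j /\
        br (br (E i) (F i)) (F j) = - ((cartanA i j)%:~R *: F j)),
     (forall i j, inr m i -> inr m j -> i != j -> br (E i) (F j) = 0),
     (forall i j, inr m i -> inr m j -> i != j -> ~~ adjA i j ->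
        br (E i) (E j) = 0 /\ br (F i) (F j) = 0) &
     (forall i j, inr m i -> inr m j -> adjA i j ->
        br (E i) (br (E i) (E j)) = 0 /\ br (F i) (br (F i) (F j)) = 0)].

Lemma chev_serre (K : fieldType) (L : lmodType K) (br : L -> L -> L) m E F :
  chevalley_generators_A br m E F -> serreA br m E F.
Proof.
case=> _ h1 h2 h3 _; split.
- by move=> i j /andP[? ?] /andP[? ?]; apply: h1; apply/andP.
- by move=> i j /andP[? ?] /andP[? ?] ij; apply: h2 => //; apply/andP.
- move=> i j /andP[? ?] /andP[? ?] ij nadj.
  have := h3 i j; rewrite /cartanA (negbTE ij); move: nadj; rewrite /adjA => /negbTE -> /=.
  by apply => //; apply/andP.
- move=> i j /andP[? ?] /andP[? ?] adj.
  have ij : i != j by move: adj; rewrite /adjA; case: eqP => [->|//]; lia.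
  have := h3 i j; rewrite /cartanA (negbTE ij); rewrite /adjA in adj; rewrite adj /=.
  by apply => //; apply/andP.
Qed.

Lemma lie_op (K : fieldType) (L : lmodType K) (br : L -> L -> L) :
  is_lie_bracket br -> is_lie_bracket (fun x y => br y x).
Proof.
move=> Hb; split => /=.
- by move=> c x y z; rewrite (lb_lin2 Hb).
- by move=> c x y z; rewrite (lb_lin1 Hb).
- by move=> x; rewrite (lb_alt Hb).
- move=> x y z.
  rewrite (br_anti Hb (br z y) x) (br_anti Hb (br x z) y) (br_anti Hb (br y x) z).
  rewrite (br_anti Hb z y) (brNr Hb) (br_anti Hb x z) (brNr Hb) (br_anti Hb y x) (brNr Hb) !opprK.
  exact: (lb_jac Hb x y z).
Qed.

Lemma serre_op (K : fieldType) (L : lmodType K) (br : L -> L -> L) m E F :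
  is_lie_bracket br -> serreA br m E F -> serreA (fun x y => br y x) m F E.
Proof.
move=> Hb [h1 h2 h3 h4]; split => /=.
- move=> i j hi hj; have [e1 e2] := h1 i j hi hj.
  rewrite (br_anti Hb (F j)) e2 opprK (br_anti Hb (E j)) e1; split => //.
- by move=> i j hi hj ij; apply: h2 => //; rewrite eq_sym.
- move=> i j hi hj ij nadj.
  have [-> ->] // := h3 j i hj hi ltac:(by rewrite eq_sym) ltac:(by move: nadj; rewrite /adjA orbC).
- move=> i j hi hj adj; have [e1 e2] := h4 i j hi hj adj.
  rewrite (br_anti Hb (br (F j) (F i)) (F i)) (br_anti Hb (F j) (F i)) (brNr Hb) opprK e2.
  by rewrite (br_anti Hb (br (E j) (E i)) (E i)) (br_anti Hb (E j) (E i)) (brNr Hb) opprK e1.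
Qed.

Lemma NR_S (K : fieldType) (L : lmodType K) (br : L -> L -> L) (E : nat -> L) p :
  (0 < p)%N -> nested_right br E p.+1 = br (nested_right br E p) (E p.+1).
Proof. by case: p. Qed.
Lemma NL_S (K : fieldType) (L : lmodType K) (br : L -> L -> L) (E : nat -> L) p :
  (0 < p)%N -> nested_left br E p.+1 = br (E p.+1) (nested_left br E p).
Proof. by case: p. Qed.
Lemma nested_op (K : fieldType) (L : lmodType K) (br : L -> L -> L) (F : nat -> L) p :
  nested_right (fun x y => br y x) F p = nested_left br F p.
Proof. elim: p => [|p IH] //; case: p IH => [|p] IH //. transitivity (br (F p.+2) (nested_right (fun x y => br y x) F p.+1)); first by []. by rewrite IH. Qed.


Ltac ix := try (unfold inr, adjA in * ); rewrite /=; lia.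

Lemma NR_wt (K : fieldType) (L : lmodType K) (br : L -> L -> L) m E F :
  is_lie_bracket br -> serreA br m E F -> forall p, (1 <= p <= m)%N -> forall k, inr m k ->
  br (br (E k) (F k)) (nested_right br E p) = (wt p k)%:~R *: nested_right br E p.
Proof.
move=> Hb [h1 h2 h3 h4]; elim=> [//|p IH] /andP[_ pm] k hk.
have k1 : (1 <= k)%N by move: hk; rewrite /inr => /andP[].
case: (posnP p) => [->|p0].
  by rewrite /= wt1 //; apply: (h1 k 1 hk _).1; ix.
rewrite NR_S // (jacL Hb) IH //; last by ix.
rewrite (brZl Hb) (h1 k p.+1 hk _).1; last by ix.
by rewrite (brZr Hb) -scalerDl -intrD wt_step.
Qed.

Lemma eq_opp0 (K : numFieldType) (L : lmodType K) (v : L) : v = - v -> v = 0.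
Proof.
move=> e; have: (2%:R : K) *: v = 0 by rewrite scaler_nat mulr2n {1}e addNr.
by move/eqP; rewrite scaler_eq0 pnatr_eq0 /= => /eqP.
Qed.

Lemma NR_A' (K : fieldType) (L : lmodType K) (br : L -> L -> L) m E F :
  is_lie_bracket br -> serreA br m E F -> forall p, (1 <= p <= m)%N ->
  forall k, (p.+2 <= k <= m)%N -> br (nested_right br E p) (E k) = 0.
Proof.
move=> Hb [h1 h2 h3 h4]; elim=> [//|p IH] /andP[_ pm] k hk.
case: (posnP p) => [->|p0]; first by rewrite /=; apply: (h3 1 k _ _ _ _).1; ix.
rewrite NR_S // (jacR Hb) (h3 p.+1 k _ _ _ _).1; try ix.
by rewrite IH; [rewrite (br0r Hb) (br0r Hb) subrr| ix | ix].
Qed.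

Lemma NR_ee (K : fieldType) (L : lmodType K) (br : L -> L -> L) m E F :
  is_lie_bracket br -> serreA br m E F -> forall p, (1 <= p)%N -> (p.+1 <= m)%N ->
  br (E p.+1) (br (E p.+1) (nested_right br E p)) = 0.
Proof.
move=> Hb HS; have HS' := HS; move: HS' => [h1 h2 h3 h4].
case=> [//|q] _ qm; case: (posnP q) => [->|q0]; first by rewrite /=; apply: (h4 2 1 _ _ _).1; ix.
rewrite NR_S // (jacL Hb (E q.+2) (nested_right br E q)).
rewrite (br_anti Hb (E q.+2) (nested_right br E q)) (NR_A' Hb HS (p:=q)); try ix.
rewrite oppr0 (br0l Hb) add0r (jacL Hb) (br_anti Hb (E q.+2) (nested_right br E q)).
rewrite (NR_A' Hb HS (p:=q)); try ix.
by rewrite oppr0 (br0l Hb) add0r (h4 q.+2 q.+1 _ _ _).1 ?(br0r Hb) //; ix.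
Qed.

Lemma NR_A (K : numFieldType) (L : lmodType K) (br : L -> L -> L) m E F :
  is_lie_bracket br -> serreA br m E F -> forall p, (1 <= p <= m)%N ->
  forall k, (1 <= k <= p)%N -> br (E k) (nested_right br E p) = 0.
Proof.
move=> Hb HS; have HS' := HS; move: HS' => [h1 h2 h3 h4].
elim=> [//|p IH] /andP[_ pm] k hk.
case: (posnP p) => [p0|p0].
  { subst p; have -> : k = 1%N by lia.
    by rewrite /= (lb_alt Hb). }
case: (eqVneq k p.+1) => [->|kp].
  by rewrite NR_S // (br_anti Hb (nested_right br E p)) (brNr Hb) (NR_ee Hb HS) ?oppr0 //; lia.
rewrite NR_S // (jacL Hb) IH; try ix.
rewrite (br0l Hb) add0r.
case: (ltnP k p) => kp'.
  by rewrite (h3 k p.+1 _ _ _ _).1 ?(br0r Hb) //; ix.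
have -> : k = p by lia.
case: p p0 IH pm {kp kp' hk} => [//|q] _ IH pm.
case: (posnP q) => [->|q0]; first by apply: (h4 1 2 _ _ _).1; ix.
apply: eq_opp0.
rewrite {1}NR_S // (jacR Hb) (h4 q.+1 q.+2 _ _ _).1; try ix.
rewrite (br0r Hb) sub0r (jacL Hb (nested_right br E q)) (@NR_A' _ _ br m E F Hb HS q _ q.+2); try ix.
rewrite (br0r Hb) addr0 -NR_S //.
rewrite [in RHS]NR_S // (jacL Hb) IH; try ix.
by rewrite (br0l Hb) add0r -NR_S.
Qed.

Lemma NR_B (K : fieldType) (L : lmodType K) (br : L -> L -> L) m E F :
  is_lie_bracket br -> serreA br m E F -> forall p, (1 <= p <= m)%N ->
  forall k, (p < k <= m)%N -> br (F k) (nested_right br E p) = 0.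
Proof.
move=> Hb [h1 h2 h3 h4]; elim=> [//|p IH] /andP[_ pm] k hk.
case: (posnP p) => [->|p0].
  by rewrite /= (br_anti Hb) (h2 1 k _ _ _) ?oppr0 //; ix.
rewrite NR_S // (jacL Hb) IH; try ix.
by rewrite (br0l Hb) add0r (br_anti Hb (F k)) (h2 p.+1 k _ _ _) ?oppr0 ?(br0r Hb) //; ix.
Qed.

Lemma NR_Fp (K : fieldType) (L : lmodType K) (br : L -> L -> L) m E F :
  is_lie_bracket br -> serreA br m E F -> forall p, (2 <= p <= m)%N ->
  br (F p) (nested_right br E p) = - nested_right br E p.-1.
Proof.
move=> Hb HS; have HS' := HS; move: HS' => [h1 h2 h3 h4].
case=> [//|p] hp; rewrite NR_S; last by lia.
rewrite (jacL Hb) (NR_B Hb HS (p:=p)); try ix.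
rewrite (br0l Hb) add0r (br_anti Hb (F p.+1)) (brNr Hb) -(br_anti Hb).
rewrite (NR_wt Hb HS); try ix.
by rewrite /wt; do ![case: eqP => ? /=]; try lia; rewrite scaleN1r.
Qed.

Lemma NR_B2 (K : fieldType) (L : lmodType K) (br : L -> L -> L) m E F :
  is_lie_bracket br -> serreA br m E F -> forall p, (1 <= p <= m)%N ->
  forall k, (1 < k < p)%N -> br (F k) (nested_right br E p) = 0.
Proof.
move=> Hb HS; have HS' := HS; move: HS' => [h1 h2 h3 h4].
elim=> [//|p IH] /andP[_ pm] k hk.
case: (posnP p) hk => [->|p0] hk; first by lia.
rewrite NR_S // (jacL Hb) (br_anti Hb (F k) (E p.+1)) (h2 p.+1 k) ?oppr0 ?(br0r Hb) ?addr0; try ix.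
case: (ltnP k p) => kp; first by rewrite IH ?(br0l Hb) //; ix.
have -> : k = p by lia.
rewrite (NR_Fp Hb HS); last by ix.
by rewrite (brNl Hb) (NR_A' Hb HS) ?oppr0 //; ix.
Qed.

Lemma NR_comm (K : fieldType) (L : lmodType K) (br : L -> L -> L) (E : nat -> L) z :
  is_lie_bracket br -> forall p, (forall k, (1 <= k <= p)%N -> br z (E k) = 0) ->
  br z (nested_right br E p) = 0.
Proof.
move=> Hb; elim=> [|p IH] hz; first by rewrite /= (br0r Hb).
case: (posnP p) => [->|p0]; first by apply: hz.
rewrite NR_S // (jacL Hb) IH; last by move=> k hk; apply: hz; lia.
by rewrite hz ?(br0l Hb) ?(br0r Hb) ?addr0 //; lia.
Qed.

Lemma NR_G2 (K : fieldType) (L : lmodType K) (br : L -> L -> L) m E F :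
  is_lie_bracket br -> serreA br m E F -> (2 <= m)%N ->
  br (F 1) (nested_right br E 2) = E 2.
Proof.
move=> Hb [h1 h2 h3 h4] m2 /=.
rewrite (jacL Hb) (br_anti Hb (F 1) (E 2)) (h2 2 1) ?oppr0 ?(br0r Hb) ?addr0; try ix.
rewrite (br_anti Hb (F 1)) (brNl Hb) (h1 1 2 _ _).1; try ix.
by rewrite /cartanA /= scaleN1r opprK.
Qed.

Lemma NR_GS (K : fieldType) (L : lmodType K) (br : L -> L -> L) m E F :
  is_lie_bracket br -> serreA br m E F -> forall p, (1 <= p)%N -> (p < m)%N ->
  br (F 1) (nested_right br E p.+1) = br (br (F 1) (nested_right br E p)) (E p.+1).
Proof.
move=> Hb [h1 h2 h3 h4] p p1 pm.
rewrite NR_S // (jacL Hb) (br_anti Hb (F 1) (E p.+1)) (h2 p.+1 1) ?oppr0 ?(br0r Hb) ?addr0 //; ix.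
Qed.

Lemma NR_GF (K : fieldType) (L : lmodType K) (br : L -> L -> L) m E F :
  is_lie_bracket br -> serreA br m E F -> forall p, (2 <= p <= m)%N ->
  br (F 1) (br (F 1) (nested_right br E p)) = 0.
Proof.
move=> Hb HS; have HS' := HS; move: HS' => [h1 h2 h3 h4].
elim=> [//|p IH] hp.
case: (eqVneq p 1%N) => [->|p1].
  by rewrite (NR_G2 Hb HS) ?(br_anti Hb (F 1)) ?(h2 2 1) ?oppr0 //; ix.
rewrite (NR_GS Hb HS); try ix.
rewrite (jacL Hb) IH; last by ix.
by rewrite (br0l Hb) add0r (br_anti Hb (F 1) (E p.+1)) (h2 p.+1 1) ?oppr0 ?(br0r Hb) //; ix.
Qed.

Lemma NR_Gcomm (K : fieldType) (L : lmodType K) (br : L -> L -> L) m E F z :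
  is_lie_bracket br -> serreA br m E F -> forall p, (2 <= p <= m)%N ->
  (forall k, (2 <= k <= p)%N -> br z (E k) = 0) ->
  br z (br (F 1) (nested_right br E p)) = 0.
Proof.
move=> Hb HS; elim=> [//|p IH] hp hz.
case: (eqVneq p 1%N) => [->|p1].
  by rewrite (NR_G2 Hb HS) ?hz //; ix.
rewrite (NR_GS Hb HS); try ix.
rewrite (jacL Hb) IH; try ix; last by move=> k hk; apply: hz; lia.
by rewrite hz ?(br0l Hb) ?(br0r Hb) ?addr0 //; lia.
Qed.

Lemma NL_B (K : fieldType) (L : lmodType K) (br : L -> L -> L) m E F :
  is_lie_bracket br -> serreA br m E F -> forall p, (1 <= p <= m)%N ->
  forall k, (p < k <= m)%N -> br (E k) (nested_left br F p) = 0.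
Proof.
move=> Hb HS p hp k hk.
have := NR_B (lie_op Hb) (serre_op Hb HS) hp hk; rewrite nested_op /= => e.
by rewrite (br_anti Hb) e oppr0.
Qed.

Lemma br_suml (K : fieldType) (L : lmodType K) (br : L -> L -> L) :
  is_lie_bracket br -> forall (g : nat -> L) z a b,
  br (\sum_(a <= i < b) g i) z = \sum_(a <= i < b) br (g i) z.
Proof.
move=> Hb g z a b.
by rewrite (big_morph (fun x => br x z) (fun x y => brDl Hb x y z) (br0l Hb z)).
Qed.

Lemma intr_suml (K : fieldType) (c : nat -> int) a b :
  (\sum_(a <= i < b) c i)%:~R = \sum_(a <= i < b) ((c i)%:~R : K).
Proof. by rewrite (big_morph (fun z : int => z%:~R : K) (@intrD K) (mulr0z 1)). Qed.

Lemma sumH_act (K : fieldType) (L : lmodType K) (br : L -> L -> L) m E F :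
  is_lie_bracket br -> serreA br m E F -> forall q l, (1 <= q <= m)%N -> inr m l ->
  br (\sum_(1 <= i < q.+1) br (E i) (F i)) (E l) = (wt q l)%:~R *: E l /\
  br (\sum_(1 <= i < q.+1) br (E i) (F i)) (F l) = - ((wt q l)%:~R *: F l).
Proof.
move=> Hb [h1 h2 h3 h4] q l hq hl.
have l1 : (1 <= l)%N by move: hl; rewrite /inr => /andP[].
rewrite !(br_suml Hb) -(wt_sum (q:=q)) //; last by lia.
rewrite intr_suml !scaler_suml -sumrN; split; apply: eq_big_nat => i hi.
  by rewrite cartanA_sym; apply: (h1 i l _ hl).1; ix.
by rewrite cartanA_sym; apply: (h1 i l _ hl).2; ix.
Qed.

Lemma NRNL (K : fieldType) (L : lmodType K) (br : L -> L -> L) m E F :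
  is_lie_bracket br -> serreA br m E F -> forall p, (1 <= p <= m)%N ->
  br (nested_right br E p) (nested_left br F p) = \sum_(1 <= i < p.+1) br (E i) (F i).
Proof.
move=> Hb HS; have HS' := HS; move: HS' => [h1 h2 h3 h4].
elim=> [//|p IH] /andP[_ pm].
case: (posnP p) => [->|p0]; first by rewrite big_nat1.
have wp : wt p p.+1 = -1 by rewrite /wt; do ![case: eqP => ? /=]; lia.
rewrite NR_S // NL_S // (jacL Hb (br (nested_right br E p) (E p.+1))).
rewrite (jacR Hb (nested_right br E p) (E p.+1) (F p.+1)).
rewrite (br_anti Hb (nested_right br E p) (F p.+1)) (NR_B Hb HS (p:=p)); try ix.
rewrite oppr0 (br0r Hb) subr0 (br_anti Hb (nested_right br E p) (br (E p.+1) (F p.+1))).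
rewrite (NR_wt Hb HS); try ix.
rewrite wp scaleN1r opprK IH; last by ix.
rewrite (jacR Hb (nested_right br E p) (E p.+1)) (NL_B Hb HS (p:=p)); try ix.
rewrite IH; last by ix.
have [sE _] := sumH_act Hb HS (q:=p) (l:=p.+1) ltac:(ix) ltac:(ix).
rewrite (br0r Hb) sub0r (br_anti Hb (E p.+1)) opprK sE.
rewrite wp scaleN1r (brNr Hb) -(br_anti Hb (E p.+1) (F p.+1)).
by rewrite [in RHS]big_nat_recr.
Qed.

Lemma T_facts (K : numFieldType) (L : lmodType K) (br : L -> L -> L) m E F :
  is_lie_bracket br -> serreA br m E F -> (4 <= m)%N ->
 [/\ forall k, inr m k -> br (br (E k) (F k)) (nested_right br E m) = (wt m k)%:~R *: nested_right br E m,
     forall k, inr m k -> br (E k) (nested_right br E m) = 0,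
     forall k, (1 < k < m)%N -> br (F k) (nested_right br E m) = 0,
     forall k, (k == 1)%N || (k == m) -> br (F k) (br (F k) (nested_right br E m)) = 0 &
     forall k, (k == 1)%N || (k == m) -> br (nested_right br E m) (br (nested_right br E m) (F k)) = 0].
Proof.
move=> Hb HS m4; have HS' := HS; move: HS' => [h1 h2 h3 h4].
have tA : forall k, inr m k -> br (E k) (nested_right br E m) = 0.
  by move=> k hk; apply: (NR_A Hb HS); ix.
split.
- by move=> k hk; apply: (NR_wt Hb HS); ix.
- exact: tA.
- by move=> k hk; apply: (NR_B2 Hb HS); ix.
- move=> k /orP[] /eqP ->; first by apply: (NR_GF Hb HS); ix.
  rewrite (NR_Fp Hb HS); last by ix.
  by rewrite (brNr Hb) (NR_B Hb HS) ?oppr0 //; ix.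
- move=> k /orP[] /eqP ->.
    rewrite (br_anti Hb _ (F 1)) (brNr Hb) (NR_Gcomm (z := nested_right br E m) Hb HS) ?oppr0 //; try ix.
    by move=> j hj; rewrite (br_anti Hb) tA ?oppr0 //; ix.
  rewrite (br_anti Hb _ (F m)) (NR_Fp Hb HS); last by ix.
  rewrite opprK NR_comm //.
  by move=> j hj; rewrite (br_anti Hb) tA ?oppr0 //; ix.
Qed.

Lemma S_facts (K : numFieldType) (L : lmodType K) (br : L -> L -> L) m E F :
  is_lie_bracket br -> serreA br m E F -> (4 <= m)%N ->
 [/\ forall k, inr m k -> br (br (E k) (F k)) (nested_left br F m) = - ((wt m k)%:~R *: nested_left br F m),
     forall k, inr m k -> br (F k) (nested_left br F m) = 0,
     forall k, (1 < k < m)%N -> br (E k) (nested_left br F m) = 0,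
     forall k, (k == 1)%N || (k == m) -> br (E k) (br (E k) (nested_left br F m)) = 0 &
     forall k, (k == 1)%N || (k == m) -> br (nested_left br F m) (br (nested_left br F m) (E k)) = 0].
Proof.
move=> Hb HS m4.
have [w a b c d] := T_facts (lie_op Hb) (serre_op Hb HS) m4.
rewrite nested_op /= in w a b c d.
split.
- by move=> k hk; rewrite (br_anti Hb) w.
- by move=> k hk; rewrite (br_anti Hb) a ?oppr0.
- by move=> k hk; rewrite (br_anti Hb) b ?oppr0.
- move=> k hk; have := c k hk.
  move=> e; rewrite (br_anti Hb (E k) (br (E k) _)) (br_anti Hb (E k) (nested_left br F m)).
  by rewrite (brNl Hb) opprK.
- move=> k hk; have := d k hk.
  move=> e; rewrite (br_anti Hb (nested_left br F m) (br (nested_left br F m) (E k))).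
  by rewrite (br_anti Hb (nested_left br F m) (E k)) (brNl Hb) opprK.
Qed.

Definition cadj (N k l : nat) : bool :=
  [|| k == l.+1, l == k.+1, (k == 1) && (l == N) | (k == N) && (l == 1)]%N.
Definition ccart (N k l : nat) : int :=
  if (k == l)%N then 2 else if cadj N k l then -1 else 0.

Definition cserre (K : fieldType) (L : lmodType K) (br : L -> L -> L) (N : nat)
   (E F : nat -> L) : Prop :=
 [/\ (forall i j, inr N i -> inr N j ->
        br (br (E i) (F i)) (E j) = (ccart N i j)%:~R *: E j /\
        br (br (E i) (F i)) (F j) = - ((ccart N i j)%:~R *: F j)),
     (forall i j, inr N i -> inr N j -> i != j -> br (E i) (F j) = 0),
     (forall i j, inr N i -> inr N j -> i != j -> ~~ cadj N i j ->
        br (E i) (E j) = 0 /\ br (F i) (F j) = 0) &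
     (forall i j, inr N i -> inr N j -> cadj N i j ->
        br (E i) (br (E i) (E j)) = 0 /\ br (F i) (br (F i) (F j)) = 0)].

Lemma ccartA m k l : (4 <= m)%N -> inr m k -> inr m l -> ccart m.+1 k l = cartanA k l.
Proof. rewrite /inr /ccart /cadj /cartanA => ? ? ?; do ![case: eqP => ? /=]; lia. Qed.
Lemma ccartN1 m l : (4 <= m)%N -> inr m l -> ccart m.+1 m.+1 l = - wt m l.
Proof. rewrite /inr /ccart /cadj /wt => ? ?; do ![case: eqP => ? /=]; lia. Qed.
Lemma ccartN2 m l : (4 <= m)%N -> inr m l -> ccart m.+1 l m.+1 = - wt m l.
Proof. rewrite /inr /ccart /cadj /wt => ? ?; do ![case: eqP => ? /=]; lia. Qed.
Lemma cadj_idx1 m l : (4 <= m)%N -> inr m l -> l != m.+1 -> ~~ cadj m.+1 m.+1 l -> (1 < l < m)%N.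
Proof. rewrite /inr /cadj => ? ? ?; do ![case: eqP => ? /=]; lia. Qed.
Lemma cadj_idx2 m l : (4 <= m)%N -> inr m l -> ~~ cadj m.+1 l m.+1 -> (1 < l < m)%N.
Proof. rewrite /inr /cadj => ? ?; do ![case: eqP => ? /=]; lia. Qed.
Lemma cadj_idx3 m l : (4 <= m)%N -> inr m l -> cadj m.+1 m.+1 l -> (l == 1)%N || (l == m).
Proof. rewrite /inr /cadj => ? ?; do ![case: eqP => ? /=]; lia. Qed.
Lemma cadj_idx4 m l : (4 <= m)%N -> inr m l -> cadj m.+1 l m.+1 -> (l == 1)%N || (l == m).
Proof. rewrite /inr /cadj => ? ?; do ![case: eqP => ? /=]; lia. Qed.
Lemma cadj_adj m k l : inr m k -> inr m l -> cadj m.+1 k l = adjA k l.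
Proof. rewrite /inr /cadj /adjA => ? ?; do ![case: eqP => ? /=]; lia. Qed.

Lemma extend (K : numFieldType) (L : lmodType K) (br : L -> L -> L) m E F (a : K) N :
  is_lie_bracket br -> serreA br m E F -> (4 <= m)%N -> N = m.+1 -> a != 0 ->
  cserre br N (fun k => if k == N then a *: nested_left br F m else E k)
              (fun k => if k == N then a^-1 *: nested_right br E m else F k).
Proof.
move=> Hb HS m4 -> a0.
have [h1 h2 h3 h4] := HS.
have [tW tA tB tZ3 tZ4] := T_facts Hb HS m4.
have [sW sA sB sZ3 sZ4] := S_facts Hb HS m4.
have TS := NRNL Hb HS (p:=m) ltac:(ix).
set T := nested_right br E m in tW tA tB tZ3 tZ4 TS *.
set S := nested_left br F m in sW sA sB sZ3 sZ4 TS *.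
set Sg := \sum_(1 <= i < m.+1) br (E i) (F i) in TS *.
have HN : br (a *: S) (a^-1 *: T) = - Sg.
  by rewrite (brZl Hb) (brZr Hb) scalerA mulfV // scale1r (br_anti Hb) TS.
have SgS : br Sg S = - ((2 : int)%:~R *: S).
  rewrite /Sg (br_suml Hb).
  transitivity (\sum_(1 <= i < m.+1) - ((wt m i)%:~R *: S)).
    by apply: eq_big_nat => i hi; apply: sW; ix.
  by rewrite sumrN -scaler_suml -intr_suml wt_tot //; lia.
have SgT : br Sg T = (2 : int)%:~R *: T.
  rewrite /Sg (br_suml Hb).
  transitivity (\sum_(1 <= i < m.+1) ((wt m i)%:~R *: T)).
    by apply: eq_big_nat => i hi; apply: tW; ix.
  by rewrite -scaler_suml -intr_suml wt_tot //; lia.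
split.
- move=> k l hk hl /=.
  case: (eqVneq k m.+1) => [->|kN]; case: (eqVneq l m.+1) => [->|lN].
  + rewrite HN !(brNl Hb) (brZr Hb) (brZr Hb) SgS SgT /ccart eqxx.
    by split; rewrite ?scalerN ?opprK !scalerA mulrC.
  + have hl' : inr m l by ix.
    have [e1 e2] := sumH_act Hb HS (q:=m) (l:=l) ltac:(ix) hl'.
    rewrite HN !(brNl Hb) e1 e2 ccartN1 // intrN !scaleNr opprK; split => //.
  + have hk' : inr m k by ix.
    rewrite (brZr Hb) (brZr Hb) sW // tW // ccartN2 // intrN !scaleNr scalerN.
    by split; rewrite ?opprK !scalerA mulrC.
  + have hk' : inr m k by ix.
    have hl' : inr m l by ix.
    by rewrite ccartA //; apply: h1.
- move=> k l hk hl kl /=.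
  case: (eqVneq k m.+1) => [ek|kN]; case: (eqVneq l m.+1) => [el|lN].
  + by move: kl; rewrite ek el eqxx.
  + by rewrite (brZl Hb) (br_anti Hb) sA ?oppr0 ?scaler0 //; ix.
  + by rewrite (brZr Hb) tA ?scaler0 //; ix.
  + by apply: h2 => //; ix.
- move=> k l hk hl kl nadj /=.
  case: (eqVneq k m.+1) => [ek|kN]; case: (eqVneq l m.+1) => [el|lN].
  + by move: kl; rewrite ek el eqxx.
  + subst k; have hl' : inr m l by ix.
    have l1m := cadj_idx1 m4 hl' lN nadj.
    rewrite (brZl Hb) (brZl Hb) (br_anti Hb S) sB // (br_anti Hb T) tB //.
    by rewrite !oppr0 !scaler0.
  + subst l; have hk' : inr m k by ix.
    have k1m := cadj_idx2 m4 hk' nadj.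
    by rewrite (brZr Hb) (brZr Hb) sB // tB // !scaler0.
  + have hk' : inr m k by ix.
    have hl' : inr m l by ix.
    by apply: h3 => //; rewrite -(cadj_adj hk' hl').
- move=> k l hk hl adj /=.
  case: (eqVneq k m.+1) => [ek|kN]; case: (eqVneq l m.+1) => [el|lN].
  + by move: adj; rewrite ek el /cadj; case: eqP; lia.
  + subst k; have hl' : inr m l by ix.
    have l1m := cadj_idx3 m4 hl' adj.
    rewrite (brZl Hb) (brZl Hb) (brZr Hb) sZ4 // (brZl Hb) (brZl Hb) (brZr Hb) tZ4 //.
    by rewrite !scaler0.
  + subst l; have hk' : inr m k by ix.
    have k1m := cadj_idx4 m4 hk' adj.
    by rewrite (brZr Hb) (brZr Hb) sZ3 // (brZr Hb) (brZr Hb) tZ3 // !scaler0.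
  + have hk' : inr m k by ix.
    have hl' : inr m l by ix.
    by apply: h4 => //; rewrite -(cadj_adj hk' hl').
Qed.

Lemma lin_X (L : zmodType) (a b c d : L) : (a + b) - (c + d) = (a - c) - (d - b).
Proof. by rewrite opprD opprB addrACA. Qed.
Lemma lin_Y (L : zmodType) (a b c d : L) : (- a - b) - (- c - d) = - ((a - c) - (d - b)).
Proof. by rewrite -lin_X opprB !opprD !opprK addrC. Qed.

Lemma g1 n i j : (3 <= n)%N -> (1 <= i <= n)%N -> (1 <= j <= n)%N ->
  gimM n i j = ccart (2 * n) i j - ccart (2 * n) (n + i) j.
Proof. rewrite /gimM /ccart /cadj => *; do ![case: eqP => ? /=; try lia]. Qed.
Lemma g2 n i j : (3 <= n)%N -> (1 <= i <= n)%N -> (1 <= j <= n)%N ->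
  gimM n i j = ccart (2 * n) (n + i) (n + j) - ccart (2 * n) i (n + j).
Proof. rewrite /gimM /ccart /cadj => *; do ![case: eqP => ? /=; try lia]. Qed.
Lemma gle0 n i j : (3 <= n)%N -> (1 <= i <= n)%N -> (1 <= j <= n)%N -> (gimM n i j <= 0)%R -> i != j ->
  ~~ ((i == 1%N) && (j == n)) && ~~ ((i == n) && (j == 1%N)).
Proof. move=> n3 hi hj; rewrite /gimM; do ![case: eqP => ? /=]; lia. Qed.
Lemma ggt0 n i j : (3 <= n)%N -> (1 <= i <= n)%N -> (1 <= j <= n)%N -> (0 < gimM n i j)%R -> i != j ->
  ((i == 1%N) && (j == n)) || ((i == n) && (j == 1%N)).
Proof. move=> n3 hi hj; rewrite /gimM; do ![case: eqP => ? /=]; lia. Qed.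
Lemma gadj n i j : (3 <= n)%N -> (1 <= i <= n)%N -> (1 <= j <= n)%N -> adjA i j ->
  gimM n i j = -1.
Proof. move=> n3 hi hj; rewrite /gimM /adjA; do ![case: eqP => ? /=]; lia. Qed.
Lemma gnadj n i j : (3 <= n)%N -> (1 <= i <= n)%N -> (1 <= j <= n)%N -> ~~ adjA i j -> i != j ->
  ~~ ((i == 1%N) && (j == n)) && ~~ ((i == n) && (j == 1%N)) -> gimM n i j = 0.
Proof. move=> n3 hi hj; rewrite /gimM /adjA; do ![case: eqP => ? /=]; lia. Qed.

Lemma serL (K : fieldType) (L : lmodType K) (br : L -> L -> L) :
  is_lie_bracket br -> forall A B u, br A B = 0 -> br B u = 0 -> br A (br A u) = 0 ->
  br (A - B) (br (A - B) u) = 0.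
Proof.
move=> Hb A B u AB Bu AAu.
rewrite (brBl Hb A B u) Bu subr0 (brBl Hb) AAu (jacL Hb B A u) Bu (br0r Hb) addr0.
by rewrite (br_anti Hb B A) AB oppr0 (br0l Hb) subrr.
Qed.
Lemma serR (K : fieldType) (L : lmodType K) (br : L -> L -> L) :
  is_lie_bracket br -> forall A B u, br A B = 0 -> br A u = 0 -> br B (br B u) = 0 ->
  br (A - B) (br (A - B) u) = 0.
Proof.
move=> Hb A B u AB Au BBu.
rewrite (brBl Hb A B u) Au sub0r (brNr Hb) (brBl Hb) BBu subr0.
by rewrite (jacL Hb A B u) AB Au (br0l Hb) (br0r Hb) addr0 oppr0.
Qed.

Ltac ix3 := try (unfold inr, cadj, adjA in * ); rewrite /=; lia.

Lemma fold_gim (K : fieldType) (L : lmodType K) (br : L -> L -> L) n E F :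
  is_lie_bracket br -> (3 <= n)%N -> cserre br (2 * n) E F ->
  gim_relations br n (fun i => E i - F (n + i)%N) (fun i => F i - E (n + i)%N)
    (fun i => br (E i - F (n + i)%N) (F i - E (n + i)%N)).
Proof.
move=> Hb n3 [c1 c2 c3 c4].
have EF : forall k l, inr (2 * n) k -> inr (2 * n) l -> k != l -> br (E k) (F l) = 0 := c2.
have FE : forall k l, inr (2 * n) k -> inr (2 * n) l -> k != l -> br (F l) (E k) = 0.
  by move=> k l hk hl kl; rewrite (br_anti Hb) c2 ?oppr0.
have EE : forall k l, inr (2 * n) k -> inr (2 * n) l -> k != l -> ~~ cadj (2 * n) k l ->
  br (E k) (E l) = 0 by move=> k l hk hl kl nk; exact: (c3 k l hk hl kl nk).1.
have FF : forall k l, inr (2 * n) k -> inr (2 * n) l -> k != l -> ~~ cadj (2 * n) k l ->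
  br (F k) (F l) = 0 by move=> k l hk hl kl nk; exact: (c3 k l hk hl kl nk).2.
have Hi : forall i, (1 <= i <= n)%N ->
    br (E i - F (n + i)%N) (F i - E (n + i)%N) = br (E i) (F i) - br (E (n + i)%N) (F (n + i)%N).
  move=> i hi.
  rewrite (brBl Hb) (brBr Hb (F i) (E (n + i)%N) (E i)) (brBr Hb (F i) (E (n + i)%N) (F (n + i)%N)).
  rewrite (EE i (n + i)%N) ?(FF (n + i)%N i); try ix3.
  by rewrite (br_anti Hb (F (n + i)%N) (E (n + i)%N)) subr0 sub0r opprK.
split.
- move=> i j hi hj /=; split => //.
  + rewrite Hi // (brBl Hb) (brBr Hb (E j)) (brBr Hb (E j)).
    rewrite (c1 i j _ _).1 ?(c1 i (n + j)%N _ _).2 ?(c1 (n + i)%N j _ _).1 ?(c1 (n + i)%N (n + j)%N _ _).2; try ix3.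
    by rewrite !opprK lin_X -!scalerBl -!intrB -g1 // -g2 // scalerBr.
  + rewrite Hi // (brBl Hb) (brBr Hb (F j)) (brBr Hb (F j)).
    rewrite (c1 i j _ _).2 ?(c1 i (n + j)%N _ _).1 ?(c1 (n + i)%N j _ _).2 ?(c1 (n + i)%N (n + j)%N _ _).1; try ix3.
    by rewrite lin_Y -!scalerBl -!intrB -g1 // -g2 // scalerBr.
- move=> i j hi hj ij g0 /=.
  have hx := gle0 n3 hi hj g0 ij.
  have e1 : br (E i - F (n + i)%N) (F j - E (n + j)%N) = 0.
    rewrite (brBl Hb) (brBr Hb (F j)) (brBr Hb (F j)).
    rewrite (EF i j) ?(EE i (n + j)%N) ?(FF (n + i)%N j) ?(FE (n + j)%N (n + i)%N); try ix3.
    by rewrite !subr0.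
  have e2 : br (F i - E (n + i)%N) (E j - F (n + j)%N) = 0.
    rewrite (brBl Hb) (brBr Hb (E j)) (brBr Hb (E j)).
    rewrite (FE j i) ?(FF i (n + j)%N) ?(EE (n + i)%N j) ?(EF (n + i)%N (n + j)%N); try ix3.
    by rewrite !subr0.
  split => //.
  + case: (boolP (adjA i j)) => adj.
    * rewrite gadj // /ad_pow /= (brBr Hb (E j)) (brBr Hb (br _ (E j))).
      rewrite (serL Hb) ?(serR Hb) ?subr0 //.
      - by apply: EF; ix3.
      - by apply: EF; ix3.
      - by apply: (c4 (n + i)%N (n + j)%N _ _ _).2; ix3.
      - by apply: EF; ix3.
      - by apply: FE; ix3.
      - by apply: (c4 i j _ _ _).1; ix3.
    * rewrite gnadj // /ad_pow /= (brBl Hb) (brBr Hb (E j)) (brBr Hb (E j)).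
      rewrite (EE i j) ?(EF i (n + j)%N) ?(FE j (n + i)%N) ?(FF (n + i)%N (n + j)%N); try ix3.
      by rewrite !subr0.
  + case: (boolP (adjA i j)) => adj.
    * rewrite gadj // /ad_pow /= (brBr Hb (F j)) (brBr Hb (br _ (F j))).
      rewrite (serL Hb) ?(serR Hb) ?subr0 //.
      - by apply: FE; ix3.
      - by apply: FE; ix3.
      - by apply: (c4 (n + i)%N (n + j)%N _ _ _).1; ix3.
      - by apply: FE; ix3.
      - by apply: EF; ix3.
      - by apply: (c4 i j _ _ _).2; ix3.
    * rewrite gnadj // /ad_pow /= (brBl Hb) (brBr Hb (F j)) (brBr Hb (F j)).
      rewrite (FF i j) ?(FE (n + j)%N i) ?(EF (n + i)%N j) ?(EE (n + i)%N (n + j)%N); try ix3.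
      by rewrite !subr0.
- move=> i j hi hj ij g0 /=.
  have hx := ggt0 n3 hi hj g0 ij.
  have gv : gimM n i j = 1.
    by move: hx; rewrite /gimM; do ![case: eqP => ? /=]; lia.
  rewrite gv /ad_pow /=; split.
  + rewrite (brBl Hb) (brBr Hb (E j)) (brBr Hb (E j)).
    rewrite (EE i j) ?(EF i (n + j)%N) ?(FE j (n + i)%N) ?(FF (n + i)%N (n + j)%N); try ix3.
    by rewrite !subr0.
  + rewrite (brBl Hb) (brBr Hb (F j)) (brBr Hb (F j)).
    rewrite (FF i j) ?(FE (n + j)%N i) ?(EF (n + i)%N j) ?(EE (n + i)%N (n + j)%N); try ix3.
    by rewrite !subr0.
  + rewrite (brBr Hb (F j)) (brBr Hb (br _ (F j))).
    rewrite (serR Hb) ?(serL Hb) ?subr0 //.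
    - by apply: EF; ix3.
    - by apply: FE; ix3.
    - by apply: (c4 i (n + j)%N _ _ _).1; ix3.
    - by apply: EF; ix3.
    - by apply: EF; ix3.
    - by apply: (c4 (n + i)%N j _ _ _).2; ix3.
  + rewrite (brBr Hb (E j)) (brBr Hb (br _ (E j))).
    rewrite (serR Hb) ?(serL Hb) ?subr0 //.
    - by apply: FE; ix3.
    - by apply: EF; ix3.
    - by apply: (c4 i (n + j)%N _ _ _).2; ix3.
    - by apply: FE; ix3.
    - by apply: FE; ix3.
    - by apply: (c4 (n + i)%N j _ _ _).1; ix3.
Qed.

Unset Implicit Arguments.
Set Strict Implicit.

Theorem lemma2p2 (R : realType) (n : nat) (a : R[i])
    (L : lmodType R[i]) (br : L -> L -> L) (E F : nat -> L) :
  (3 <= n)%N -> a != 0 -> a != 1 -> a != -1 ->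
  is_lie_bracket br ->
  chevalley_generators_A br (2 * n).-1 E F ->
  let E' := fun k => if k == (2 * n)%N
                     then a *: nested_left br F (2 * n).-1 else E k in
  let F' := fun k => if k == (2 * n)%N
                     then a^-1 *: nested_right br E (2 * n).-1 else F k in
  gim_hom_exists br n (fun i => E' i - F' (n + i)%N)
                      (fun i => F' i - E' (n + i)%N).
Proof.
move=> n3 a0 _ _ Hb HC E' F'.
have HS := chev_serre HC.
have m4 : (4 <= (2 * n).-1)%N by lia.
have hN : (2 * n)%N = ((2 * n).-1).+1 by lia.
have HC' := extend (a := a) Hb HS m4 hN a0.
exists (fun i => br (E' i - F' (n + i)%N) (F' i - E' (n + i)%N)).
exact: (fold_gim Hb n3 HC').
Qed.
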